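(* Let $f$ be a nonconstant harmonic function on $K$. Then the derivative of the restriction of $f$ to $[p_1,p_2]$ exists and is infinite ($+\infty$ or $-\infty$) at all junction points of $[p_1,p_2]$ with at most one exception (one-sided derivatives at the endpoints $p_1,p_2$). Moreover, on the whole contour $[p_0,p_1]\cup[p_0,p_2]\cup[p_1,p_2]$ of $G_0$ there is at most one junction point $x$ for which it fails that, for every edge $E$ of $G_0$ containing $x$, the derivative of $f|_E$ at $x$ (one-sided if $x$ is an endpoint of $E$) exists and is infinite; in particular the derivative of a restriction can vanish at no more than one junction point of the contour.
   Context: Let $p_0,p_1,p_2$ be the vertices of a unit equilateral triangle in $\mathbb{R}^2$, $F_i(x)=(x+p_i)/2$, and $K$ the Sierpinski gasket (the attractor of $F_0,F_1,F_2$). For words $w$ of length $m$, $F_w$ is the composition $F_{w_1}\circ\cdots\circ F_{w_m}$; the minimal triangles of the graph $G_m$ are the triangles with vertices $F_w(p_0),F_w(p_1),F_w(p_2)$, and $V_m$ is the set of all these vertices. Junction points are the points of $\bigcup_m V_m$; on an edge $[p_i,p_j]$ parametrized by $t\mapsto p_i+t(p_j-p_i)$, $t\in[0,1]$, these are exactly the points with dyadic rational $t$. A continuous $f:K\to\mathbb{R}$ is harmonic if for every $m\ge0$ and every minimal triangle of $G_m$ with vertices $v_i,v_j,v_k$, the value at the midpoint $v_{ij}$ of $[v_i,v_j]$ is $\frac15(2f(v_i)+2f(v_j)+f(v_k))$. Restrictions to edges are viewed as functions of the linear parameter $t\in[0,1]$. *)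

(* Defs.v *)
From Stdlib Require Import Reals Lra List.
Open Scope R_scope.

Definition pt : Type := (R * R)%type.

Definition dist (x y : pt) : R :=
  sqrt ((fst x - fst y) ^ 2 + (snd x - snd y) ^ 2).

(* The three vertices are given as p : nat -> pt; only p 0, p 1, p 2 matter. *)
Definition unit_equilateral (p : nat -> pt) : Prop :=
  dist (p 0%nat) (p 1%nat) = 1 /\ dist (p 0%nat) (p 2%nat) = 1 /\
  dist (p 1%nat) (p 2%nat) = 1.

Definition Fmap (p : nat -> pt) (i : nat) (x : pt) : pt :=
  ((fst x + fst (p i)) / 2, (snd x + snd (p i)) / 2).

Definition word (w : list nat) : Prop := Forall (fun i => (i < 3)%nat) w.

Definition Fw (p : nat -> pt) (w : list nat) (x : pt) : pt :=
  fold_right (fun i y => Fmap p i y) x w.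

Definition in_triangle (p : nat -> pt) (x : pt) : Prop :=
  exists a b c, 0 <= a /\ 0 <= b /\ 0 <= c /\ a + b + c = 1 /\
    x = (a * fst (p 0%nat) + b * fst (p 1%nat) + c * fst (p 2%nat),
         a * snd (p 0%nat) + b * snd (p 1%nat) + c * snd (p 2%nat)).

(* The Sierpinski gasket = attractor of F_0,F_1,F_2, realized as
   the intersection over m of the union over |w| = m of F_w(triangle). *)
Definition K (p : nat -> pt) (x : pt) : Prop :=
  forall m : nat, exists w y, word w /\ length w = m /\ in_triangle p y /\
    x = Fw p w y.

Definition V (p : nat -> pt) (m : nat) (x : pt) : Prop :=
  exists w i, word w /\ length w = m /\ (i < 3)%nat /\ x = Fw p w (p i).

Definition junction (p : nat -> pt) (x : pt) : Prop := exists m, V p m x.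

Definition midpoint (x y : pt) : pt :=
  ((fst x + fst y) / 2, (snd x + snd y) / 2).

Definition continuous_on_K (p : nat -> pt) (f : pt -> R) : Prop :=
  forall x, K p x -> forall eps, 0 < eps -> exists delta, 0 < delta /\
    forall y, K p y -> dist x y < delta -> Rabs (f y - f x) < eps.

Definition harmonic (p : nat -> pt) (f : pt -> R) : Prop :=
  continuous_on_K p f /\
  forall w i j k, word w -> (i < 3)%nat -> (j < 3)%nat -> (k < 3)%nat ->
    i <> j -> i <> k -> j <> k ->
    f (midpoint (Fw p w (p i)) (Fw p w (p j))) =
      (2 * f (Fw p w (p i)) + 2 * f (Fw p w (p j)) + f (Fw p w (p k))) / 5.

Definition edge (p : nat -> pt) (i j : nat) (t : R) : pt :=
  (fst (p i) + t * (fst (p j) - fst (p i)),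
   snd (p i) + t * (snd (p j) - snd (p i))).

(* the derivative of g : [0,1] -> R at t exists and equals +oo or -oo
   (one-sided at the endpoints 0, 1, since s ranges over [0,1]) *)
Definition infinite_deriv (g : R -> R) (t : R) : Prop :=
  (forall M, exists d, 0 < d /\ forall s, 0 <= s <= 1 -> 0 < Rabs (s - t) < d ->
      (g s - g t) / (s - t) > M) \/
  (forall M, exists d, 0 < d /\ forall s, 0 <= s <= 1 -> 0 < Rabs (s - t) < d ->
      (g s - g t) / (s - t) < M).

Definition zero_deriv (g : R -> R) (t : R) : Prop :=
  forall eps, 0 < eps -> exists d, 0 < d /\ forall s, 0 <= s <= 1 ->
      0 < Rabs (s - t) < d -> Rabs ((g s - g t) / (s - t)) < eps.

Definition on_contour (p : nat -> pt) (x : pt) : Prop :=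
  exists i j t, (i < 3)%nat /\ (j < 3)%nat /\ i <> j /\ 0 <= t <= 1 /\ x = edge p i j t.

Definition good_point (p : nat -> pt) (f : pt -> R) (x : pt) : Prop :=
  forall i j t, (i < 3)%nat -> (j < 3)%nat -> i <> j -> 0 <= t <= 1 ->
    x = edge p i j t -> infinite_deriv (fun s => f (edge p i j s)) t.

Definition vanishing_point (p : nat -> pt) (f : pt -> R) (x : pt) : Prop :=
  exists i j t, (i < 3)%nat /\ (j < 3)%nat /\ i <> j /\ 0 <= t <= 1 /\
    x = edge p i j t /\ zero_deriv (fun s => f (edge p i j s)) t.

(* Main.v *)
Require Import Defs.
From Stdlib Require Import Reals List.
Open Scope R_scope.
From Stdlib Require Import Lra Lia Psatz Classical.
Import ListNotations.


Definition bit (b:bool) : R := if b then 1 else 0.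
Fixpoint dpos (w : list bool) : R :=
  match w with nil => 0 | b :: w' => (dpos w' + bit b)/2 end.
Definition len (w : list bool) : R := (/2)^(length w).
Definition mid (w : list bool) : R := dpos w + len w / 2.

Lemma len_cons b w : len (b :: w) = len w / 2.
Proof. unfold len; simpl; field. Qed.
Lemma len_nil : len [] = 1.
Proof. reflexivity. Qed.
Lemma len_pos w : 0 < len w.
Proof. unfold len; apply pow_lt; lra. Qed.
Lemma len_app1 w b : len (w ++ [b]) = len w / 2.
Proof. unfold len; rewrite length_app, pow_add; simpl; field. Qed.
Lemma len_app w v : len (w ++ v) = len w * (/2)^(length v).
Proof. unfold len; rewrite length_app, pow_add; reflexivity. Qed.
Lemma pos_app1 w b : dpos (w ++ [b]) = dpos w + len w * bit b / 2.
Proof.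
  induction w as [|c w IH]; simpl.
  - unfold len; simpl; destruct b; simpl; field.
  - rewrite IH, len_cons. field.
Qed.
Lemma bit_bounds b : 0 <= bit b <= 1.
Proof. destruct b; simpl; lra. Qed.
Lemma pos_bounds w : 0 <= dpos w /\ dpos w + len w <= 1.
Proof.
  induction w as [|c w IH]; simpl.
  - rewrite len_nil; lra.
  - rewrite len_cons. pose proof (bit_bounds c). pose proof (len_pos w). lra.
Qed.
Lemma pos_flip w : dpos (map negb w) = 1 - dpos w - len w.
Proof.
  induction w as [|c w IH]; simpl.
  - rewrite len_nil; lra.
  - rewrite IH, len_cons. destruct c; simpl; field.
Qed.
Lemma len_flip w : len (map negb w) = len w.
Proof. unfold len; rewrite length_map; reflexivity. Qed.
Lemma mid_flip w : mid (map negb w) = 1 - mid w.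
Proof. unfold mid; rewrite pos_flip, len_flip; field. Qed.

Lemma pos_class w : dpos w = 0 \/ exists u, dpos w = mid u.
Proof.
  induction w as [|b w IH] using rev_ind.
  - left; reflexivity.
  - rewrite pos_app1. destruct b; simpl.
    + right; exists w; unfold mid; field.
    + rewrite Rmult_0_r. replace (0/2) with 0 by field. rewrite Rplus_0_r. exact IH.
Qed.
Lemma end_class w : dpos w + len w = 1 \/ exists u, dpos w + len w = mid u.
Proof.
  induction w as [|b w IH] using rev_ind.
  - left; simpl; rewrite len_nil; lra.
  - rewrite pos_app1, len_app1. destruct b; simpl.
    + replace (dpos w + len w * 1 / 2 + len w / 2) with (dpos w + len w) by field. exact IH.
    + right; exists w; unfold mid; field.
Qed.

Definition step (b:bool) (q : R*R) : R*R :=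
  if b then ((fst q + snd q)/5, 3*snd q/5) else (3*fst q/5, (fst q + snd q)/5).
Definition Q (q : R*R) (u : list bool) : R*R := fold_left (fun q b => step b q) u q.
Definition sumQ q u := fst (Q q u) + snd (Q q u).
Definition Iq (q:R*R) := fst q * snd q >= 0 /\ fst q + snd q <> 0.

Lemma I_step b q : Iq q -> Iq (step b q).
Proof.
  unfold Iq; destruct q as [x y]; destruct b; simpl; intros [H1 H2]; split.
  - nra.
  - intro H. assert (x = -4*y) by lra. subst. nra.
  - nra.
  - intro H. assert (y = -4*x) by lra. subst. nra.
Qed.
Lemma I_Q u : forall q, Iq q -> Iq (Q q u).
Proof. induction u as [|b u IH]; intros q Hq; simpl; auto. apply IH, I_step, Hq. Qed.
Lemma I_sum q u : Iq q -> sumQ q u <> 0.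
Proof. intros H. destruct (I_Q u q H) as [_ H2]. exact H2. Qed.
Lemma notI q u : sumQ q u = 0 -> fst q * snd q < 0 \/ fst q + snd q = 0.
Proof.
  intros H. destruct (Rlt_dec (fst q * snd q) 0) as [h|h]; [left; exact h|].
  destruct (Req_dec (fst q + snd q) 0) as [h2|h2]; [right; exact h2|].
  exfalso. apply (I_sum q u); [split; lra | exact H].
Qed.

Lemma Q_uniq u : forall q v, ~ (fst q = 0 /\ snd q = 0) ->
  sumQ q u = 0 -> sumQ q v = 0 -> u = v.
Proof.
  induction u as [|c u IH]; intros [x y] v Hn Hu Hv; destruct v as [|c' v].
  - reflexivity.
  - exfalso. unfold sumQ in Hu; simpl in Hu, Hn.
    apply (I_sum (step c' (x,y)) v); [|exact Hv].
    destruct c'; unfold Iq; simpl; split; try nra;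
      intro; apply Hn; split; lra.
  - exfalso. unfold sumQ in Hv; simpl in Hv, Hn.
    apply (I_sum (step c (x,y)) u); [|exact Hu].
    destruct c; unfold Iq; simpl; split; try nra;
      intro; apply Hn; split; lra.
  - unfold sumQ in Hu, Hv; simpl in Hu, Hv, Hn.
    destruct c, c'.
    + f_equal. apply (IH (step true (x,y))); auto. simpl; intros [h1 h2]; apply Hn; split; lra.
    + exfalso. apply notI in Hu. apply notI in Hv. simpl in Hu, Hv.
      destruct Hu, Hv; nra.
    + exfalso. apply notI in Hu. apply notI in Hv. simpl in Hu, Hv.
      destruct Hu, Hv; nra.
    + f_equal. apply (IH (step false (x,y))); auto. simpl; intros [h1 h2]; apply Hn; split; lra.
Qed.

Lemma Q_flip u : forall x y, Q (-y, -x) (map negb u) = (- snd (Q (x,y) u), - fst (Q (x,y) u)).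
Proof.
  induction u as [|c u IH]; intros x y; simpl.
  - reflexivity.
  - destruct c; simpl.
    + replace (3 * - y / 5, (- y + - x) / 5) with (- (3*y/5), - ((x+y)/5)) by (f_equal; field).
      apply IH.
    + replace ((- y + - x) / 5, 3 * - x / 5) with (- ((x+y)/5), - (3*x/5)) by (f_equal; field).
      apply IH.
Qed.
Lemma sumQ_flip u x y : sumQ (-y, -x) (map negb u) = - sumQ (x,y) u.
Proof. unfold sumQ; rewrite Q_flip; simpl; ring. Qed.


Definition lt_ (i j : nat) (b : bool) : nat := if b then j else i.
Definition wd i j (w : list bool) := map (lt_ i j) w.

Lemma Fw_app p l1 l2 x : Fw p (l1 ++ l2) x = Fw p l1 (Fw p l2 x).
Proof. unfold Fw; apply fold_right_app. Qed.
Lemma Fw_mid p w x y : Fw p w (midpoint x y) = midpoint (Fw p w x) (Fw p w y).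
Proof.
  induction w as [|a w IH]; simpl; [reflexivity|].
  fold (Fw p w (midpoint x y)) (Fw p w x) (Fw p w y). rewrite IH.
  unfold Fmap, midpoint; apply injective_projections; simpl; field.
Qed.
Lemma Fmap_self p m : Fmap p m (p m) = p m.
Proof. unfold Fmap; apply injective_projections; simpl; field. Qed.
Lemma Fw_edge p i j w s : Fw p (wd i j w) (edge p i j s) = edge p i j (dpos w + len w * s).
Proof.
  induction w as [|b w IH]; simpl.
  - rewrite len_nil; f_equal; ring.
  - fold (Fw p (wd i j w) (edge p i j s)). rewrite IH, len_cons.
    unfold Fmap, edge, lt_; destruct b; apply injective_projections; simpl; field.
Qed.
Lemma edge0 p i j : edge p i j 0 = p i.
Proof. unfold edge; apply injective_projections; simpl; ring. Qed.
Lemma edge1 p i j : edge p i j 1 = p j.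
Proof. unfold edge; apply injective_projections; simpl; ring. Qed.
Lemma edge_rev p i j s : edge p j i (1 - s) = edge p i j s.
Proof. unfold edge; apply injective_projections; simpl; ring. Qed.
Lemma wd_flip i j w : wd j i (map negb w) = wd i j w.
Proof. unfold wd; rewrite map_map; apply map_ext; intros []; reflexivity. Qed.
Lemma word_wd i j w : (i < 3)%nat -> (j < 3)%nat -> word (wd i j w).
Proof.
  intros Hi Hj; unfold word, wd; apply Forall_map; apply Forall_forall;
  intros [] _; simpl; auto.
Qed.

Lemma sqrt1 a : 0 <= a -> sqrt a = 1 -> a = 1.
Proof. intros H1 H2. rewrite <- (sqrt_sqrt a H1), H2; ring. Qed.

Lemma D2 p i j : unit_equilateral p -> (i < 3)%nat -> (j < 3)%nat -> i <> j ->
  (fst (p i) - fst (p j))^2 + (snd (p i) - snd (p j))^2 = 1.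
Proof.
  intros [H01 [H02 H12]] Hi Hj Hij. unfold Defs.dist in *.
  apply sqrt1 in H01; [|apply Rplus_le_le_0_compat; apply pow2_ge_0].
  apply sqrt1 in H02; [|apply Rplus_le_le_0_compat; apply pow2_ge_0].
  apply sqrt1 in H12; [|apply Rplus_le_le_0_compat; apply pow2_ge_0].
  destruct i as [|[|[|i]]]; destruct j as [|[|[|j]]]; try lia; nra.
Qed.

Lemma dist_edge p i j s s' : unit_equilateral p -> (i < 3)%nat -> (j < 3)%nat -> i <> j ->
  Defs.dist (edge p i j s) (edge p i j s') = Rabs (s - s').
Proof.
  intros U Hi Hj Hij. pose proof (D2 p i j U Hi Hj Hij) as D.
  unfold Defs.dist, edge; simpl. rewrite <- sqrt_Rsqr_abs. f_equal. unfold Rsqr.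
  transitivity ((s - s')^2 * ((fst (p i) - fst (p j))^2 + (snd (p i) - snd (p j))^2)); [ring|].
  rewrite D; ring.
Qed.

Lemma edge_inj p i j t t' : unit_equilateral p -> (i < 3)%nat -> (j < 3)%nat -> i <> j ->
  edge p i j t = edge p i j t' -> t = t'.
Proof.
  intros U Hi Hj Hij H. pose proof (D2 p i j U Hi Hj Hij) as D.
  assert (H1 := f_equal fst H). assert (H2 := f_equal snd H). unfold edge in H1, H2; simpl in H1, H2.
  assert ((t - t')^2 = 0).
  { transitivity ((t - t')^2 * ((fst (p i) - fst (p j))^2 + (snd (p i) - snd (p j))^2)); [rewrite D; ring|].
    nra. }
  nra.
Qed.

Definition bc (i j : nat) (u : R) (l : nat) : R :=
  if Nat.eqb l i then 1 - u else if Nat.eqb l j then u else 0.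
Lemma in_tri_edge p i j u : (i < 3)%nat -> (j < 3)%nat -> i <> j -> 0 <= u <= 1 ->
  in_triangle p (edge p i j u).
Proof.
  intros Hi Hj Hij Hu. exists (bc i j u 0), (bc i j u 1), (bc i j u 2).
  destruct i as [|[|[|i]]]; destruct j as [|[|[|j]]]; try lia; unfold bc; simpl;
  (repeat split; [lra|lra|lra|ring|]); unfold edge; apply injective_projections; simpl; ring.
Qed.
Lemma in_tri_vertex p m : (m < 3)%nat -> in_triangle p (p m).
Proof.
  intros Hm. destruct m as [|[|[|m]]]; try lia.
  - exists 1, 0, 0. repeat split; try lra; try (apply injective_projections; simpl; ring).
  - exists 0, 1, 0. repeat split; try lra; try (apply injective_projections; simpl; ring).
  - exists 0, 0, 1. repeat split; try lra; try (apply injective_projections; simpl; ring).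
Qed.
Lemma in_tri_Fmap p l y : (l < 3)%nat -> in_triangle p y -> in_triangle p (Fmap p l y).
Proof.
  intros Hl [a [b [c [Ha [Hb [Hc [Hs Hy]]]]]]]. subst y.
  destruct l as [|[|[|l]]]; try lia.
  - exists ((a+1)/2), (b/2), (c/2). repeat split; try lra; try (unfold Fmap; apply injective_projections; simpl; field).
  - exists (a/2), ((b+1)/2), (c/2). repeat split; try lra; try (unfold Fmap; apply injective_projections; simpl; field).
  - exists (a/2), (b/2), ((c+1)/2). repeat split; try lra; try (unfold Fmap; apply injective_projections; simpl; field).
Qed.
Lemma in_tri_Fw p w y : word w -> in_triangle p y -> in_triangle p (Fw p w y).
Proof.
  induction w as [|l w IH]; intros Hw Hy; simpl; auto.
  inversion Hw; subst. apply in_tri_Fmap; auto.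
Qed.

Lemma Fw_repeat p m n : Fw p (repeat m n) (p m) = p m.
Proof. induction n; simpl; auto. fold (Fw p (repeat m n) (p m)); rewrite IHn; apply Fmap_self. Qed.

Lemma K_junction p w m : word w -> (m < 3)%nat -> K p (Fw p w (p m)).
Proof.
  intros Hw Hm n. destruct (Compare_dec.le_lt_dec n (length w)) as [h|h].
  - exists (firstn n w), (Fw p (skipn n w) (p m)). repeat split.
    + unfold word in *. rewrite <- (firstn_skipn n w) in Hw. apply Forall_app in Hw; tauto.
    + rewrite length_firstn; lia.
    + apply in_tri_Fw; [|apply in_tri_vertex; auto].
      unfold word in *. rewrite <- (firstn_skipn n w) in Hw. apply Forall_app in Hw; tauto.
    + rewrite <- Fw_app, firstn_skipn; reflexivity.
  - exists (w ++ repeat m (n - length w)), (p m). repeat split.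
    + unfold word in *. apply Forall_app; split; auto. apply Forall_forall; intros x Hx.
      apply repeat_spec in Hx; lia.
    + rewrite length_app, repeat_length; lia.
    + apply in_tri_vertex; auto.
    + rewrite Fw_app, Fw_repeat; reflexivity.
Qed.



Lemma subcell w n s : dpos w <= s <= dpos w + len w ->
  exists v, length v = n /\ dpos (w ++ v) <= s <= dpos (w ++ v) + len (w ++ v).
Proof.
  intros Hs. induction n as [|n IH].
  - exists []. rewrite app_nil_r. auto.
  - destruct IH as [v [Hl Hv]].
    destruct (Rle_dec s (dpos (w ++ v) + len (w ++ v) / 2)).
    + exists (v ++ [false]). rewrite length_app, Hl, Nat.add_comm; split; [reflexivity|].
      rewrite app_assoc, pos_app1, len_app1; simpl. lra.
    + exists (v ++ [true]). rewrite length_app, Hl, Nat.add_comm; split; [reflexivity|].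
      rewrite app_assoc, pos_app1, len_app1; simpl. lra.
Qed.

Lemma K_edge p i j s : (i < 3)%nat -> (j < 3)%nat -> i <> j -> 0 <= s <= 1 -> K p (edge p i j s).
Proof.
  intros Hi Hj Hij Hs m.
  destruct (subcell [] m s) as [v [Hl Hv]]; [simpl; rewrite len_nil; lra|].
  simpl in Hv. pose proof (len_pos v) as Lp.
  exists (wd i j v), (edge p i j ((s - dpos v)/len v)). repeat split.
  - apply word_wd; auto.
  - unfold wd; rewrite length_map; auto.
  - apply in_tri_edge; auto. split.
    + apply Rmult_le_pos; [lra| left; apply Rinv_0_lt_compat; lra].
    + apply Rmult_le_reg_r with (len v); [lra|]. unfold Rdiv; rewrite Rmult_assoc, Rinv_l; lra.
  - rewrite Fw_edge. f_equal. field. lra.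
Qed.

Lemma small_pow d : 0 < d -> exists n, (/2)^n < d.
Proof.
  intros Hd. destruct (pow_lt_1_zero (/2)) with d as [N HN]; [rewrite Rabs_pos_eq; lra | exact Hd |].
  exists N. specialize (HN N (le_n N)). rewrite Rabs_pos_eq in HN; auto. apply pow_le; lra.
Qed.

Definition tri (i j k : nat) := (i < 3 /\ j < 3 /\ k < 3 /\ i <> j /\ i <> k /\ j <> k)%nat.

Definition cA p (f : pt -> R) i j w := f (Fw p (wd i j w) (p i)).
Definition cB p (f : pt -> R) i j w := f (Fw p (wd i j w) (p j)).
Definition cC p (f : pt -> R) i j k w := f (Fw p (wd i j w) (p k)).
Definition xL p f i j k w := (cB p f i j w + cC p f i j k w)/2 - cA p f i j w.
Definition yR p f i j k w := cB p f i j w - (cA p f i j w + cC p f i j k w)/2.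

Definition hrule p (f : pt -> R) := forall w i j k, word w -> (i < 3)%nat -> (j < 3)%nat -> (k < 3)%nat ->
    i <> j -> i <> k -> j <> k ->
    f (midpoint (Fw p w (p i)) (Fw p w (p j))) =
      (2 * f (Fw p w (p i)) + 2 * f (Fw p w (p j)) + f (Fw p w (p k))) / 5.

Section Cells.
Variables (p : nat -> pt) (f : pt -> R) (i j k : nat).
Hypothesis T : tri i j k.
Hypothesis H : hrule p f.

Lemma wd_app1 w b : wd i j (w ++ [b]) = wd i j w ++ [lt_ i j b].
Proof. unfold wd; rewrite map_app; reflexivity. Qed.

Lemma Fw_vert w b m : Fw p (wd i j (w ++ [b])) (p m) =
   midpoint (Fw p (wd i j w) (p m)) (Fw p (wd i j w) (p (lt_ i j b))).
Proof. rewrite wd_app1, Fw_app; simpl. unfold Fmap at 1. rewrite <- Fw_mid. reflexivity. Qed.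

Lemma Fw_vert_same w b : Fw p (wd i j (w ++ [b])) (p (lt_ i j b)) = Fw p (wd i j w) (p (lt_ i j b)).
Proof. rewrite wd_app1, Fw_app; simpl. rewrite Fmap_self. reflexivity. Qed.

Lemma midpoint_comm x y : midpoint x y = midpoint y x.
Proof. unfold midpoint; apply injective_projections; simpl; field. Qed.

Ltac hr a b c := rewrite (H _ a b c); [ | apply word_wd; unfold tri in T; tauto | unfold tri in T; lia ..].

Lemma cA_F w : cA p f i j (w ++ [false]) = cA p f i j w.
Proof. unfold cA. apply (f_equal f). apply (Fw_vert_same w false). Qed.
Lemma cB_F w : cB p f i j (w ++ [false]) = (2 * cB p f i j w + 2 * cA p f i j w + cC p f i j k w)/5.
Proof. unfold cB, cA, cC. rewrite Fw_vert; simpl. hr j i k. reflexivity. Qed.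
Lemma cC_F w : cC p f i j k (w ++ [false]) = (2 * cC p f i j k w + 2 * cA p f i j w + cB p f i j w)/5.
Proof. unfold cB, cA, cC. rewrite Fw_vert; simpl. hr k i j. reflexivity. Qed.
Lemma cA_T w : cA p f i j (w ++ [true]) = (2 * cA p f i j w + 2 * cB p f i j w + cC p f i j k w)/5.
Proof. unfold cB, cA, cC. rewrite Fw_vert; simpl. hr i j k. reflexivity. Qed.
Lemma cB_T w : cB p f i j (w ++ [true]) = cB p f i j w.
Proof. unfold cB. apply (f_equal f). apply (Fw_vert_same w true). Qed.
Lemma cC_T w : cC p f i j k (w ++ [true]) = (2 * cC p f i j k w + 2 * cB p f i j w + cA p f i j w)/5.
Proof. unfold cB, cA, cC. rewrite Fw_vert; simpl. hr k j i. reflexivity. Qed.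

Lemma xy_step w b : (xL p f i j k (w ++ [b]), yR p f i j k (w ++ [b])) = step b (xL p f i j k w, yR p f i j k w).
Proof.
  unfold xL, yR. destruct b; simpl.
  - rewrite cA_T, cB_T, cC_T. f_equal; field.
  - rewrite cA_F, cB_F, cC_F. f_equal; field.
Qed.

Lemma xy_Q w : (xL p f i j k w, yR p f i j k w) = Q (xL p f i j k [], yR p f i j k []) w.
Proof.
  induction w as [|b w IH] using rev_ind; [reflexivity|].
  rewrite xy_step, IH. unfold Q. rewrite fold_left_app. reflexivity.
Qed.

Lemma desc_lower lo w : lo <= cA p f i j w -> lo <= cB p f i j w -> lo <= cC p f i j k w ->
  forall v, lo <= cA p f i j (w ++ v) /\ lo <= cB p f i j (w ++ v) /\ lo <= cC p f i j k (w ++ v).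
Proof.
  intros h1 h2 h3 v. induction v as [|b v IH] using rev_ind.
  - rewrite app_nil_r; auto.
  - rewrite app_assoc. destruct b.
    + rewrite cA_T, cB_T, cC_T. lra.
    + rewrite cA_F, cB_F, cC_F. lra.
Qed.

End Cells.


Lemma cA_edge p f i j w : cA p f i j w = f (edge p i j (dpos w)).
Proof. unfold cA. rewrite <- (edge0 p i j) at 1. rewrite Fw_edge. f_equal. f_equal. ring. Qed.
Lemma cB_edge p f i j w : cB p f i j w = f (edge p i j (dpos w + len w)).
Proof. unfold cB. rewrite <- (edge1 p i j) at 1. rewrite Fw_edge. f_equal. f_equal. ring. Qed.

Lemma maxp p f i j k lo w : unit_equilateral p -> continuous_on_K p f -> hrule p f -> tri i j k ->
  lo <= cA p f i j w -> lo <= cB p f i j w -> lo <= cC p f i j k w ->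
  forall s, dpos w <= s <= dpos w + len w -> lo <= f (edge p i j s).
Proof.
  intros U Hc Hh T h1 h2 h3 s Hs.
  destruct (Rle_dec lo (f (edge p i j s))) as [ok|nok]; [exact ok|exfalso].
  assert (Ti := T). destruct Ti as [Hi [Hj [Hk [Hij [Hik Hjk]]]]].
  pose proof (pos_bounds w) as Pw. pose proof (len_pos w) as Lw.
  assert (Hs01 : 0 <= s <= 1) by lra.
  assert (He : 0 < lo - f (edge p i j s)) by lra.
  destruct (Hc (edge p i j s) (K_edge p i j s Hi Hj Hij Hs01) (lo - f (edge p i j s)) He) as [d [Hd Hcd]].
  destruct (small_pow (d / len w)) as [n Hn]. { apply Rdiv_lt_0_compat; lra. }
  destruct (subcell w n s Hs) as [v [Hl Hv]].
  pose proof (pos_bounds (w ++ v)) as Pv. pose proof (len_pos (w ++ v)) as Lv.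
  assert (Hd2 : len (w ++ v) < d).
  { rewrite len_app, Hl. apply Rmult_lt_reg_r with (/ len w). apply Rinv_0_lt_compat; lra.
    replace (len w * (/2)^n * / len w) with ((/2)^n) by (field; lra). exact Hn. }
  destruct (desc_lower p f i j k T Hh lo w h1 h2 h3 v) as [g1 _].
  rewrite cA_edge in g1.
  assert (Hs2 : 0 <= dpos (w ++ v) <= 1) by lra.
  specialize (Hcd (edge p i j (dpos (w ++ v))) (K_edge p i j _ Hi Hj Hij Hs2)).
  rewrite dist_edge in Hcd; auto.
  assert (Rabs (s - dpos (w ++ v)) < d) as Hr by (apply Rabs_def1; lra).
  specialize (Hcd Hr). apply Rabs_def2 in Hcd. lra.
Qed.


Lemma pow_le1 x n : 0 <= x <= 1 -> 0 <= x^n <= 1.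
Proof. intros Hx; induction n; simpl; [lra|]. nra. Qed.
Lemma bern n : 1 + INR n / 5 <= (6/5)^n.
Proof.
  induction n; [simpl; lra|]. rewrite S_INR. change ((6/5)^(S n)) with (6/5 * (6/5)^n).
  assert (0 <= INR n) by apply pos_INR. nra.
Qed.

Lemma dyadic_aux m : forall N u, (/2)^(N+m) < u -> u <= (/2)^N ->
  exists n, (N <= n)%nat /\ (/2)^(S n) <= u <= (/2)^n.
Proof.
  induction m as [|m IH]; intros N u H1 H2.
  - rewrite Nat.add_0_r in H1; lra.
  - destruct (Rle_dec ((/2)^(S N)) u) as [h|h].
    + exists N; split; [lia| lra].
    + destruct (IH (S N) u) as [n [Hn Hu]].
      * replace (S N + m)%nat with (N + S m)%nat by lia; exact H1.
      * lra.
      * exists n; split; [lia|exact Hu].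
Qed.
Lemma dyadic N u : 0 < u -> u <= (/2)^N -> exists n, (N <= n)%nat /\ (/2)^(S n) <= u <= (/2)^n.
Proof.
  intros H1 H2. destruct (small_pow u H1) as [k Hk].
  apply (dyadic_aux k N u); auto.
  rewrite pow_add. pose proof (pow_le1 (/2) N ltac:(lra)). pose proof (pow_le1 (/2) k ltac:(lra)). nra.
Qed.

Lemma Rdiv_gt a b M : 0 < b -> M * b < a -> M < a / b.
Proof.
  intros Hb H. apply Rmult_lt_reg_r with b; auto. unfold Rdiv. rewrite Rmult_assoc, Rinv_l; lra.
Qed.

Definition zz p f i j k w := yR p f i j k w - xL p f i j k w / 2.

Section Right.
Variables (p : nat -> pt) (f : pt -> R) (i j k : nat).
Hypothesis U : unit_equilateral p.
Hypothesis Hc : continuous_on_K p f.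
Hypothesis H : hrule p f.
Hypothesis T : tri i j k.

Lemma rep_S (C : list bool) n : C ++ repeat false (S n) = (C ++ repeat false n) ++ [false].
Proof. rewrite <- app_assoc, <- repeat_cons. reflexivity. Qed.

Lemma Cn_facts C n :
  dpos (C ++ repeat false n) = dpos C /\ len (C ++ repeat false n) = len C * (/2)^n /\
  cA p f i j (C ++ repeat false n) = cA p f i j C /\
  xL p f i j k (C ++ repeat false n) = (3/5)^n * xL p f i j k C /\
  zz p f i j k (C ++ repeat false n) = (1/5)^n * zz p f i j k C.
Proof.
  induction n as [|n [h1 [h2 [h3 [h4 h5]]]]].
  - simpl. rewrite app_nil_r. repeat split; ring.
  - rewrite rep_S. pose proof (xy_step p f i j k T H (C ++ repeat false n) false) as E.
    simpl in E. injection E as E1 E2.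
    repeat split.
    + rewrite pos_app1, h1. simpl bit. idtac.
    rewrite Rmult_0_r; unfold Rdiv; rewrite Rmult_0_l, Rplus_0_r; reflexivity.
    + rewrite len_app1, h2. change ((/2)^(S n)) with (/2 * (/2)^n). field.
    + rewrite cA_F; auto.
    + rewrite E1, h4. change ((3/5)^(S n)) with (3/5 * (3/5)^n). field.
    + unfold zz in *. rewrite E1, E2. unfold zz in h5. simpl.
      replace ((xL p f i j k (C ++ repeat false n) + yR p f i j k (C ++ repeat false n)) / 5 -
               3 * xL p f i j k (C ++ repeat false n) / 5 / 2)
        with ((yR p f i j k (C ++ repeat false n) - xL p f i j k (C ++ repeat false n) / 2) / 5) by field.
      rewrite h5. change ((1/5)^(S n)) with (1/5 * (1/5)^n). field.
Qed.

Lemma Dn_lower C n s :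
  0 <= xL p f i j k (C ++ repeat false n) ->
  dpos C + len C * (/2)^n / 2 <= s <= dpos C + len C * (/2)^n ->
  cA p f i j C + (9 * xL p f i j k (C ++ repeat false n) - 10 * Rabs (zz p f i j k (C ++ repeat false n)))/15
    <= f (edge p i j s).
Proof.
  intros Hx Hs. destruct (Cn_facts C n) as [h1 [h2 [h3 _]]].
  set (W := C ++ repeat false n) in *.
  apply (maxp p f i j k _ (W ++ [true]) U Hc H T).
  - rewrite (cA_T p f i j k T H). rewrite <- h3. unfold zz, xL, yR in *.
    pose proof (Rle_abs (cB p f i j W - (cA p f i j W + cC p f i j k W) / 2 - ((cB p f i j W + cC p f i j k W) / 2 - cA p f i j W) / 2)).
    pose proof (Rle_abs (- (cB p f i j W - (cA p f i j W + cC p f i j k W) / 2 - ((cB p f i j W + cC p f i j k W) / 2 - cA p f i j W) / 2))).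
    rewrite Rabs_Ropp in *. lra.
  - rewrite cB_T. rewrite <- h3. unfold zz, xL, yR in *.
    pose proof (Rle_abs (cB p f i j W - (cA p f i j W + cC p f i j k W) / 2 - ((cB p f i j W + cC p f i j k W) / 2 - cA p f i j W) / 2)).
    pose proof (Rle_abs (- (cB p f i j W - (cA p f i j W + cC p f i j k W) / 2 - ((cB p f i j W + cC p f i j k W) / 2 - cA p f i j W) / 2))).
    rewrite Rabs_Ropp in *. lra.
  - rewrite (cC_T p f i j k T H). rewrite <- h3. unfold zz, xL, yR in *.
    pose proof (Rle_abs (cB p f i j W - (cA p f i j W + cC p f i j k W) / 2 - ((cB p f i j W + cC p f i j k W) / 2 - cA p f i j W) / 2)).
    pose proof (Rle_abs (- (cB p f i j W - (cA p f i j W + cC p f i j k W) / 2 - ((cB p f i j W + cC p f i j k W) / 2 - cA p f i j W) / 2))).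
    rewrite Rabs_Ropp in *. lra.
  - rewrite pos_app1, len_app1, h1, h2. simpl. lra.
Qed.


Lemma right_pos C : 0 < xL p f i j k C ->
  forall M, exists d, 0 < d /\ forall s, 0 <= s <= 1 -> 0 < s - dpos C < d ->
    (f (edge p i j s) - f (edge p i j (dpos C))) / (s - dpos C) > M.
Proof.
  intros Hx M.
  set (L := len C). set (x0 := xL p f i j k C). set (z0 := zz p f i j k C).
  assert (HL : 0 < L) by apply len_pos.
  set (R0 := 10 * Rabs z0 + 15 * Rabs M * L + 1).
  destruct (INR_archimed (9 * x0 / 5) R0) as [N HN]; [unfold x0; lra|].
  exists (L * (/2)^N). split; [apply Rmult_lt_0_compat; [lra| apply pow_lt; lra]|].
  intros s Hs Hd.
  set (u := s - dpos C) in *.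
  destruct (dyadic N (u / L)) as [n [HNn Hn]].
  { apply Rdiv_lt_0_compat; lra. }
  { apply Rmult_le_reg_r with L; [lra|]. unfold Rdiv; rewrite Rmult_assoc, Rinv_l; lra. }
  set (h := (/2)^n) in *.
  assert (Hh : 0 < h) by (apply pow_lt; lra).
  assert (Hu1 : L * h / 2 <= u /\ u <= L * h).
  { change ((/2)^(S n)) with (/2 * h) in Hn. destruct Hn as [a b]. split.
    - apply Rmult_le_reg_r with (/L); [apply Rinv_0_lt_compat; lra|].
      replace (L * h / 2 * / L) with (/2 * h) by (field; lra). exact a.
    - apply Rmult_le_reg_r with (/L); [apply Rinv_0_lt_compat; lra|].
      replace (L * h * / L) with h by (field; lra). exact b. }
  destruct (Cn_facts C n) as [_ [_ [h3 [h4 h5]]]].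
  assert (Hx3 : 0 <= xL p f i j k (C ++ repeat false n)).
  { rewrite h4. apply Rmult_le_pos; [apply pow_le; lra| unfold x0 in Hx; lra]. }
  assert (Hsr : dpos C + len C * (/2)^n / 2 <= s <= dpos C + len C * (/2)^n).
  { fold L h. unfold u in Hu1. lra. }
  pose proof (Dn_lower C n s Hx3 Hsr) as Hlow.
  rewrite h4, h5 in Hlow. fold x0 z0 in Hlow.
  assert (E1 : (3/5)^n = (6/5)^n * h) by (unfold h; rewrite <- Rpow_mult_distr; f_equal; field).
  assert (E2 : (1/5)^n = (2/5)^n * h) by (unfold h; rewrite <- Rpow_mult_distr; f_equal; field).
  rewrite E1, E2, Rabs_mult, (Rabs_pos_eq ((2/5)^n * h)) in Hlow
    by (apply Rmult_le_pos; [apply pow_le; lra| lra]).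
  pose proof (pow_le1 (2/5) n ltac:(lra)) as P25.
  pose proof (bern n) as B. pose proof (le_INR N n HNn) as HNn'.
  assert (HE : 9 * x0 * (6/5)^n > R0).
  { assert (0 < x0) by (unfold x0; lra). nra. }
  assert (Hz : 0 <= Rabs z0) by apply Rabs_pos.
  assert (Hmain : 15 * Rabs M * L * h < 9 * ((6/5)^n * h * x0) - 10 * ((2/5)^n * h * Rabs z0)).
  { assert (0 <= (1 - (2/5)^n) * (h * Rabs z0)) by (apply Rmult_le_pos; [lra| apply Rmult_le_pos; lra]).
    assert (10 * ((2/5)^n * h * Rabs z0) <= 10 * (h * Rabs z0)) by nra.
    assert (h * (15 * Rabs M * L + 1) < h * (9 * x0 * (6/5)^n - 10 * Rabs z0)).
    { apply Rmult_lt_compat_l; [lra|]. unfold R0 in HE; lra. }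
    nra. }
  assert (Hfc : cA p f i j C = f (edge p i j (dpos C))) by apply cA_edge.
  apply Rlt_gt. apply Rdiv_gt; [lra|].
  assert (M * u <= Rabs M * u) by (apply Rmult_le_compat_r; [lra| apply Rle_abs]).
  assert (Rabs M * u <= Rabs M * (L * h)) by (apply Rmult_le_compat_l; [apply Rabs_pos| lra]).
  lra.
Qed.

End Right.


Lemma hrule_neg p f : hrule p f -> hrule p (fun x => - f x).
Proof. intros H w i j k Hw Hi Hj Hk a b c. cbv beta. rewrite (H w i j k); auto. field. Qed.
Lemma cont_neg p f : continuous_on_K p f -> continuous_on_K p (fun x => - f x).
Proof.
  intros H x Hx e He. destruct (H x Hx e He) as [d [Hd Hd2]]. exists d; split; auto.
  intros y Hy Hxy. replace (- f y - - f x) with (- (f y - f x)) by ring. rewrite Rabs_Ropp; auto.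
Qed.
Lemma tri_swap i j k : tri i j k -> tri j i k.
Proof. unfold tri; lia. Qed.

Section Sides.
Variables (p : nat -> pt) (f : pt -> R) (i j k : nat).
Hypothesis U : unit_equilateral p.
Hypothesis Hc : continuous_on_K p f.
Hypothesis H : hrule p f.
Hypothesis T : tri i j k.

Lemma right_neg C : xL p f i j k C < 0 ->
  forall M, exists d, 0 < d /\ forall s, 0 <= s <= 1 -> 0 < s - dpos C < d ->
    (f (edge p i j s) - f (edge p i j (dpos C))) / (s - dpos C) < M.
Proof.
  intros Hx M.
  destruct (right_pos p (fun x => - f x) i j k U (cont_neg p f Hc) (hrule_neg p f H) T C) with (-M)
    as [d [Hd Hd2]].
  { unfold xL, cA, cB, cC in *. lra. }
  exists d; split; auto. intros s Hs Hsd. specialize (Hd2 s Hs Hsd).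
  replace ((- f (edge p i j s) - - f (edge p i j (dpos C))) / (s - dpos C))
    with (- ((f (edge p i j s) - f (edge p i j (dpos C))) / (s - dpos C))) in Hd2 by (field; lra).
  lra.
Qed.

Lemma xL_flip C : xL p f j i k (map negb C) = - yR p f i j k C.
Proof. unfold xL, yR, cA, cB, cC. rewrite wd_flip. ring. Qed.

End Sides.

Section Left.
Variables (p : nat -> pt) (f : pt -> R) (i j k : nat).
Hypothesis U : unit_equilateral p.
Hypothesis Hc : continuous_on_K p f.
Hypothesis H : hrule p f.
Hypothesis T : tri i j k.


Lemma left_aux C : (forall M, exists d, 0 < d /\ forall s, 0 <= s <= 1 -> 0 < s - dpos (map negb C) < d ->
    (f (edge p j i s) - f (edge p j i (dpos (map negb C)))) / (s - dpos (map negb C)) < M) ->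
  forall M, exists d, 0 < d /\ forall s, 0 <= s <= 1 -> 0 < dpos C + len C - s < d ->
    (f (edge p i j s) - f (edge p i j (dpos C + len C))) / (s - (dpos C + len C)) > M.
Proof.
  intros Hr M. destruct (Hr (-M)) as [d [Hd Hd2]]. exists d; split; auto.
  intros s Hs Hsd. rewrite pos_flip in Hd2.
  specialize (Hd2 (1 - s) ltac:(lra) ltac:(lra)).
  replace ((1 - s) - (1 - dpos C - len C)) with (- (s - (dpos C + len C))) in Hd2 by ring.
  replace (1 - dpos C - len C) with (1 - (dpos C + len C)) in Hd2 by ring.
  rewrite !edge_rev in Hd2.
  replace ((f (edge p i j s) - f (edge p i j (dpos C + len C))) / - (s - (dpos C + len C)))
    with (- ((f (edge p i j s) - f (edge p i j (dpos C + len C))) / (s - (dpos C + len C)))) in Hd2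
    by (field; lra).
  lra.
Qed.
End Left.

Section Inf.
Variables (p : nat -> pt) (f : pt -> R) (i j k : nat).
Hypothesis U : unit_equilateral p.
Hypothesis Hc : continuous_on_K p f.
Hypothesis H : hrule p f.
Hypothesis T : tri i j k.

Lemma left_pos C : yR p f i j k C > 0 ->
  forall M, exists d, 0 < d /\ forall s, 0 <= s <= 1 -> 0 < dpos C + len C - s < d ->
    (f (edge p i j s) - f (edge p i j (dpos C + len C))) / (s - (dpos C + len C)) > M.
Proof.
  intros Hy. apply left_aux. apply (right_neg p f j i k U Hc H (tri_swap i j k T)).
  rewrite xL_flip. lra.
Qed.

End Inf.

Lemma left_neg p f i j k C : unit_equilateral p -> continuous_on_K p f -> hrule p f -> tri i j k ->
  yR p f i j k C < 0 ->
  forall M, exists d, 0 < d /\ forall s, 0 <= s <= 1 -> 0 < dpos C + len C - s < d ->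
    (f (edge p i j s) - f (edge p i j (dpos C + len C))) / (s - (dpos C + len C)) < M.
Proof.
  intros U Hc H T Hy M.
  destruct (left_pos p (fun x => - f x) i j k U (cont_neg p f Hc) (hrule_neg p f H) T C) with (-M)
    as [d [Hd Hd2]].
  { unfold yR, cA, cB, cC in *. lra. }
  exists d; split; auto. intros s Hs Hsd. specialize (Hd2 s Hs Hsd).
  replace ((- f (edge p i j s) - - f (edge p i j (dpos C + len C))) / (s - (dpos C + len C)))
    with (- ((f (edge p i j s) - f (edge p i j (dpos C + len C))) / (s - (dpos C + len C)))) in Hd2 by (field; lra).
  lra.
Qed.


Definition rpos (x:R) : bool := if Rlt_dec 0 x then true else false.
Definition RS (g : R -> R) t (up : bool) := forall M, exists d, 0 < d /\ forall s, 0 <= s <= 1 -> 0 < s - t < d ->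
   if up then (g s - g t) / (s - t) > M else (g s - g t) / (s - t) < M.
Definition LS (g : R -> R) t (up : bool) := forall M, exists d, 0 < d /\ forall s, 0 <= s <= 1 -> 0 < t - s < d ->
   if up then (g s - g t) / (s - t) > M else (g s - g t) / (s - t) < M.

Lemma inf_of_sides g t up : RS g t up -> LS g t up -> infinite_deriv g t.
Proof.
  intros HR HL. destruct up; [left|right]; intros M;
  destruct (HR M) as [d1 [Hd1 H1]]; destruct (HL M) as [d2 [Hd2 H2]];
  exists (Rmin d1 d2); (split; [apply Rmin_pos; auto|]);
  intros s Hs Ha; pose proof (Rmin_l d1 d2); pose proof (Rmin_r d1 d2);
  (destruct (Rlt_dec t s); [apply H1; auto; rewrite Rabs_pos_eq in Ha; lra
   | apply H2; auto; rewrite Rabs_left1 in Ha; lra]).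
Qed.

Lemma LS_0 g up : LS g 0 up.
Proof. intros M. exists 1. split; [lra|]. intros s Hs Hd. lra. Qed.
Lemma RS_1 g up : RS g 1 up.
Proof. intros M. exists 1. split; [lra|]. intros s Hs Hd. lra. Qed.

Section Inf2.
Variables (p : nat -> pt) (f : pt -> R) (i j k : nat).
Hypothesis U : unit_equilateral p.
Hypothesis Hc : continuous_on_K p f.
Hypothesis H : hrule p f.
Hypothesis T : tri i j k.

Let g := fun s => f (edge p i j s).

Lemma RS_cell C : xL p f i j k C <> 0 -> RS g (dpos C) (rpos (xL p f i j k C)).
Proof.
  intros Hx. unfold rpos; destruct (Rlt_dec 0 (xL p f i j k C)).
  - intros M; apply (right_pos p f i j k U Hc H T C); auto.
  - intros M; apply (right_neg p f i j k U Hc H T C); lra.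
Qed.
Lemma LS_cell C : yR p f i j k C <> 0 -> LS g (dpos C + len C) (rpos (yR p f i j k C)).
Proof.
  intros Hx. unfold rpos; destruct (Rlt_dec 0 (yR p f i j k C)).
  - intros M; destruct (left_pos p f i j k U Hc H T C) with M as [d [Hd Hd2]]; auto.
    exists d; split; auto.
  - intros M; destruct (left_neg p f i j k C U Hc H T) with M as [d [Hd Hd2]]; [lra|].
    exists d; split; auto.
Qed.

Lemma inf_0 : xL p f i j k [] <> 0 -> infinite_deriv g 0.
Proof. intros Hx. apply (inf_of_sides g 0 _ (RS_cell [] Hx) (LS_0 _ _)). Qed.
Lemma inf_1 : yR p f i j k [] <> 0 -> infinite_deriv g 1.
Proof.
  intros Hx. pose proof (LS_cell [] Hx) as L. simpl in L. rewrite len_nil, Rplus_0_l in L.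
  apply (inf_of_sides g 1 _ (RS_1 _ _) L).
Qed.
Lemma inf_mid u : xL p f i j k u + yR p f i j k u <> 0 -> infinite_deriv g (mid u).
Proof.
  intros Hs.
  pose proof (xy_step p f i j k T H u true) as E1. pose proof (xy_step p f i j k T H u false) as E2.
  simpl in E1, E2. injection E1 as E1 _. injection E2 as _ E2.
  assert (Hx : xL p f i j k (u ++ [true]) <> 0) by (rewrite E1; lra).
  assert (Hy : yR p f i j k (u ++ [false]) <> 0) by (rewrite E2; lra).
  pose proof (RS_cell _ Hx) as R1. pose proof (LS_cell _ Hy) as L1.
  rewrite pos_app1 in R1. rewrite pos_app1, len_app1 in L1. simpl bit in R1, L1.
  replace (dpos u + len u * 1 / 2) with (mid u) in R1 by (unfold mid; field).
  replace (dpos u + len u * 0 / 2 + len u / 2) with (mid u) in L1 by (unfold mid; field).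
  rewrite E1 in R1. rewrite E2 in L1.
  apply (inf_of_sides g (mid u) _ R1 L1).
Qed.
End Inf2.


Section Lam.
Variables (p : nat -> pt) (i j k : nat).
Hypothesis U : unit_equilateral p.
Hypothesis T : tri i j k.

Let ux := fst (p j) - fst (p i).
Let uy := snd (p j) - snd (p i).
Let Dt := ux * (snd (p k) - snd (p i)) - uy * (fst (p k) - fst (p i)).
Definition lam (x : pt) := (ux * (snd x - snd (p i)) - uy * (fst x - fst (p i))) / Dt.

Lemma Dt_nz : Dt <> 0.
Proof.
  destruct T as [Hi [Hj [Hk [Hij [Hik Hjk]]]]].
  pose proof (D2 p j i U Hj Hi ltac:(lia)) as E1.
  pose proof (D2 p k i U Hk Hi ltac:(lia)) as E2.
  pose proof (D2 p k j U Hk Hj ltac:(lia)) as E3.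
  unfold Dt, ux, uy.
  set (a := fst (p j) - fst (p i)) in *. set (b := snd (p j) - snd (p i)) in *.
  set (c := fst (p k) - fst (p i)) in *. set (d := snd (p k) - snd (p i)) in *.
  assert (E3' : (c - a)^2 + (d - b)^2 = 1).
  { rewrite <- E3. unfold a, b, c, d. ring. }
  assert (Hdot : a * c + b * d = 1/2) by nra.
  assert (Hl : (a * d - b * c)^2 + (a*c + b*d)^2 = (a^2+b^2)*(c^2+d^2)) by ring.
  rewrite E1, E2, Hdot in Hl. intro Z. rewrite Z in Hl. lra.
Qed.

Lemma lam_Fmap l x : lam (Fmap p l x) = (lam x + lam (p l)) / 2.
Proof. pose proof Dt_nz. unfold lam, Fmap; simpl. clearbody ux uy Dt. field; auto. Qed.
Lemma lam_i : lam (p i) = 0.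
Proof. pose proof Dt_nz. unfold lam. field; auto. Qed.
Lemma lam_j : lam (p j) = 0.
Proof. pose proof Dt_nz. unfold lam. fold ux uy. field; auto. Qed.
Lemma lam_k : lam (p k) = 1.
Proof. pose proof Dt_nz as Hd. unfold lam. unfold Dt in *. field; auto. Qed.
Lemma lam_edge t : lam (edge p i j t) = 0.
Proof. pose proof Dt_nz. unfold lam, edge; simpl. fold ux uy. field; auto. Qed.

Lemma lam_vert l : (l < 3)%nat -> (lam (p l) = 0 /\ (l = i \/ l = j)) \/ (lam (p l) = 1 /\ l = k).
Proof.
  intros Hl. destruct T as [Hi [Hj [Hk [Hij [Hik Hjk]]]]].
  assert (l = i \/ l = j \/ l = k) as [ -> | [ -> | -> ] ] by lia.
  - left; split; auto; apply lam_i.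
  - left; split; auto; apply lam_j.
  - right; split; auto; apply lam_k.
Qed.

Lemma lam_nonneg w m : word w -> (m < 3)%nat -> 0 <= lam (Fw p w (p m)).
Proof.
  intros Hw Hm. induction w as [|l w IH]; simpl.
  - destruct (lam_vert m Hm) as [[ -> _] | [ -> _]]; lra.
  - inversion Hw; subst. fold (Fw p w (p m)). rewrite lam_Fmap.
    specialize (IH H2). destruct (lam_vert l H1) as [[ -> _] | [ -> _]]; lra.
Qed.

Lemma lam_zero w m : word w -> (m < 3)%nat -> lam (Fw p w (p m)) = 0 ->
  (exists wb, w = wd i j wb) /\ (m = i \/ m = j).
Proof.
  intros Hw Hm. induction w as [|l w IH]; simpl; intros Z.
  - split; [exists []; reflexivity|]. destruct (lam_vert m Hm) as [[_ h]|[h _]]; auto. lra.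
  - inversion Hw; subst. fold (Fw p w (p m)) in Z. rewrite lam_Fmap in Z.
    pose proof (lam_nonneg w m H2 Hm).
    destruct (lam_vert l H1) as [[h1 h2]|[h1 h2]]; [|lra].
    rewrite h1 in Z. destruct (IH H2 ltac:(lra)) as [[wb ->] Hm2]. split; auto.
    exists (Nat.eqb l j :: wb). simpl. f_equal.
    destruct T as [_ [_ [_ [Hij _]]]].
    destruct h2 as [ -> | -> ].
    + apply Nat.eqb_neq in Hij. rewrite Hij. reflexivity.
    + rewrite Nat.eqb_refl. reflexivity.
Qed.
End Lam.

Lemma junction_class p i j k t : unit_equilateral p -> tri i j k -> 0 <= t <= 1 ->
  junction p (edge p i j t) -> t = 0 \/ t = 1 \/ exists u, t = mid u.
Proof.
  intros U T Ht [n [w [m [Hw [_ [Hm Hx]]]]]].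
  assert (T' := T). destruct T' as [Hi [Hj [Hk [Hij [Hik Hjk]]]]].
  pose proof (lam_edge p i j k U T t) as L. rewrite Hx in L.
  destruct (lam_zero p i j k U T w m Hw Hm L) as [[wb ->] [ -> | -> ]].
  - rewrite <- (edge0 p i j) in Hx. rewrite Fw_edge in Hx. apply edge_inj in Hx; auto.
    rewrite Rmult_0_r, Rplus_0_r in Hx. subst t.
    destruct (pos_class wb) as [h|h]; auto.
  - rewrite <- (edge1 p i j) in Hx. rewrite Fw_edge in Hx. apply edge_inj in Hx; auto.
    rewrite Rmult_1_r in Hx. subst t.
    destruct (end_class wb) as [h|h]; auto.
Qed.


Definition Av p (f : pt -> R) (m : nat) : R :=
  match m with
  | O => (f (p 1%nat) + f (p 2%nat))/2 - f (p 0%nat)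
  | 1%nat => (f (p 0%nat) + f (p 2%nat))/2 - f (p 1%nat)
  | _ => (f (p 0%nat) + f (p 1%nat))/2 - f (p 2%nat)
  end.

Lemma Av_sum p f : Av p f 0 + Av p f 1 + Av p f 2 = 0.
Proof. unfold Av; lra. Qed.

Lemma xL_nil p f i j k : tri i j k -> xL p f i j k [] = Av p f i /\ yR p f i j k [] = - Av p f j.
Proof.
  intros [Hi [Hj [Hk [Hij [Hik Hjk]]]]]. unfold xL, yR, cA, cB, cC, Av; simpl.
  destruct i as [|[|[|i]]]; destruct j as [|[|[|j]]]; destruct k as [|[|[|k]]]; try lia; split; lra.
Qed.

Lemma const_junction p f : hrule p f -> f (p 0%nat) = f (p 1%nat) -> f (p 1%nat) = f (p 2%nat) ->
  forall w, word w -> forall m, (m < 3)%nat -> f (Fw p w (p m)) = f (p 0%nat).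
Proof.
  intros H e1 e2 w. induction w as [|l w IH] using rev_ind; intros Hw m Hm.
  - simpl. destruct m as [|[|[|m]]]; try lia; lra.
  - unfold word in Hw. apply Forall_app in Hw. destruct Hw as [Hw1 Hw2]. inversion Hw2; subst.
    rewrite Fw_app. simpl.
    destruct (Nat.eq_dec m l) as [->|ne].
    + rewrite Fmap_self. apply IH; auto.
    + change (Fmap p l (p m)) with (midpoint (p m) (p l)). rewrite Fw_mid.
      rewrite (H w m l (3 - m - l)%nat); auto; try lia.
      rewrite !IH; auto; try lia. field.
Qed.

Lemma Fw_diff p w a b : fst (Fw p w a) - fst (Fw p w b) = (/2)^(length w) * (fst a - fst b) /\
  snd (Fw p w a) - snd (Fw p w b) = (/2)^(length w) * (snd a - snd b).
Proof.
  induction w as [|l w [IH1 IH2]]; simpl; [split; ring|].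
  fold (Fw p w a) (Fw p w b). unfold Fmap; simpl. split.
  - replace ((fst (Fw p w a) + fst (p l)) / 2 - (fst (Fw p w b) + fst (p l)) / 2)
      with ((fst (Fw p w a) - fst (Fw p w b))/2) by field. rewrite IH1. field.
  - replace ((snd (Fw p w a) + snd (p l)) / 2 - (snd (Fw p w b) + snd (p l)) / 2)
      with ((snd (Fw p w a) - snd (Fw p w b))/2) by field. rewrite IH2. field.
Qed.

Lemma tri_dist p y : unit_equilateral p -> in_triangle p y ->
  (fst y - fst (p 0%nat))^2 + (snd y - snd (p 0%nat))^2 <= 1.
Proof.
  intros U [a [b [c [Ha [Hb [Hc [Hs Hy]]]]]]]. subst y. simpl.
  pose proof (D2 p 1 0 U ltac:(lia) ltac:(lia) ltac:(lia)) as E1.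
  pose proof (D2 p 2 0 U ltac:(lia) ltac:(lia) ltac:(lia)) as E2.
  pose proof (D2 p 2 1 U ltac:(lia) ltac:(lia) ltac:(lia)) as E3.
  set (ux := fst (p 1%nat) - fst (p 0%nat)) in *. set (uy := snd (p 1%nat) - snd (p 0%nat)) in *.
  set (vx := fst (p 2%nat) - fst (p 0%nat)) in *. set (vy := snd (p 2%nat) - snd (p 0%nat)) in *.
  assert (E3' : (vx - ux)^2 + (vy - uy)^2 = 1) by (rewrite <- E3; unfold ux, uy, vx, vy; ring).
  assert (Hdot : ux * vx + uy * vy = 1/2) by nra.
  assert (a = 1 - b - c) by lra. subst a.
  replace ((1 - b - c) * fst (p 0%nat) + b * fst (p 1%nat) + c * fst (p 2%nat) - fst (p 0%nat))
    with (b * ux + c * vx) by (unfold ux, vx; ring).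
  replace ((1 - b - c) * snd (p 0%nat) + b * snd (p 1%nat) + c * snd (p 2%nat) - snd (p 0%nat))
    with (b * uy + c * vy) by (unfold uy, vy; ring).
  assert ((b * ux + c * vx)^2 + (b*uy + c*vy)^2 = b^2 * (ux^2+uy^2) + c^2 * (vx^2+vy^2) + 2*b*c*(ux*vx+uy*vy)) by ring.
  rewrite E1, E2, Hdot in H. nra.
Qed.

Lemma const_K p f : unit_equilateral p -> harmonic p f ->
  Av p f 0 = 0 -> Av p f 1 = 0 -> Av p f 2 = 0 -> forall x, K p x -> f x = f (p 0%nat).
Proof.
  intros U [Hc H] a0 a1 a2 x Hx.
  assert (e1 : f (p 0%nat) = f (p 1%nat)) by (unfold Av in *; lra).
  assert (e2 : f (p 1%nat) = f (p 2%nat)) by (unfold Av in *; lra).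
  destruct (Req_dec (f x) (f (p 0%nat))) as [ok|ne]; auto. exfalso.
  assert (He : 0 < Rabs (f x - f (p 0%nat))) by (apply Rabs_pos_lt; lra).
  destruct (Hc x Hx _ He) as [d [Hd Hcd]].
  destruct (small_pow d Hd) as [n Hn].
  destruct (Hx n) as [w [y [Hw [Hl [Hy Hxy]]]]].
  assert (Kz : K p (Fw p w (p 0%nat))) by (apply K_junction; auto; lia).
  specialize (Hcd _ Kz).
  rewrite (const_junction p f H e1 e2 w Hw 0 ltac:(lia)) in Hcd.
  assert (Hdist : Defs.dist x (Fw p w (p 0%nat)) < d).
  { unfold Defs.dist. destruct (Fw_diff p w y (p 0%nat)) as [D1 D2']. rewrite Hxy, D1, D2', Hl.
    pose proof (tri_dist p y U Hy) as Td.
    set (h := (/2)^n) in *. assert (0 < h) by (apply pow_lt; lra).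
    assert (Hq : (h * (fst y - fst (p 0%nat)))^2 + (h * (snd y - snd (p 0%nat)))^2 < d^2).
    { replace ((h * (fst y - fst (p 0%nat)))^2 + (h * (snd y - snd (p 0%nat)))^2)
        with (h^2 * ((fst y - fst (p 0%nat))^2 + (snd y - snd (p 0%nat))^2)) by ring.
      assert (h^2 < d^2) by nra.
      assert (0 <= (fst y - fst (p 0%nat))^2 + (snd y - snd (p 0%nat))^2)
        by (apply Rplus_le_le_0_compat; apply pow2_ge_0).
      assert (0 <= h^2) by (apply pow2_ge_0). nra. }
    rewrite <- (sqrt_pow2 d) by lra. apply sqrt_lt_1; auto.
    apply Rplus_le_le_0_compat; apply pow2_ge_0. apply pow2_ge_0. }
  specialize (Hcd Hdist). rewrite Rabs_minus_sym in Hcd. lra.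
Qed.


Definition desc p f x :=
  (exists m, (m < 3)%nat /\ x = p m /\ Av p f m = 0) \/
  (exists i j u, (i < 3 /\ j < 3 /\ i <> j)%nat /\ x = edge p i j (mid u) /\ sumQ (Av p f i, - Av p f j) u = 0).

Lemma third i j : (i < 3)%nat -> (j < 3)%nat -> i <> j -> tri i j (3 - i - j)%nat.
Proof. unfold tri; lia. Qed.

Lemma bad_desc p f x : unit_equilateral p -> harmonic p f -> junction p x -> ~ good_point p f x -> desc p f x.
Proof.
  intros U [Hc H] J G. destruct (classic (desc p f x)) as [D|ND]; auto. exfalso. apply G.
  intros i j t Hi Hj Hij Ht Hx. subst x.
  pose proof (third i j Hi Hj Hij) as T. set (k := (3 - i - j)%nat) in T.
  destruct (xL_nil p f i j k T) as [X0 Y0].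
  destruct (junction_class p i j k t U T Ht J) as [->|[->|[u ->]]].
  - destruct (Req_dec (Av p f i) 0) as [Z|Z].
    + exfalso; apply ND; left; exists i; repeat split; auto. apply edge0.
    + apply (inf_0 p f i j k U Hc H T). rewrite X0; auto.
  - destruct (Req_dec (Av p f j) 0) as [Z|Z].
    + exfalso; apply ND; left; exists j; repeat split; auto. apply edge1.
    + apply (inf_1 p f i j k U Hc H T). rewrite Y0; lra.
  - pose proof (xy_Q p f i j k T H u) as E. rewrite X0, Y0 in E.
    destruct (Req_dec (xL p f i j k u + yR p f i j k u) 0) as [Z|Z].
    + exfalso; apply ND; right; exists i, j, u; repeat split; auto.
      unfold sumQ. rewrite <- E. simpl. exact Z.
    + apply (inf_mid p f i j k U Hc H T u Z).
Qed.

Ltac conc3 := 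
  match goal with
  | |- _ => idtac
  end.

Lemma two_zero p f i j : (i < 3)%nat -> (j < 3)%nat -> i <> j -> Av p f i = 0 -> Av p f j = 0 ->
  Av p f 0 = 0 /\ Av p f 1 = 0 /\ Av p f 2 = 0.
Proof.
  intros Hi Hj Hij a b. pose proof (Av_sum p f).
  destruct i as [|[|[|i]]]; destruct j as [|[|[|j]]]; try lia; repeat split; lra.
Qed.

Lemma desc_uniq p f x y : ~ (Av p f 0 = 0 /\ Av p f 1 = 0 /\ Av p f 2 = 0) ->
  unit_equilateral p -> desc p f x -> desc p f y -> x = y.
Proof.
  intros NZ U Dx Dy. pose proof (Av_sum p f) as S.
  destruct Dx as [[m [Hm [-> Am]]] | [i [j [u [[Hi [Hj Hij]] [-> Su]]]]]];
  destruct Dy as [[m' [Hm' [-> Am']]] | [i' [j' [v [[Hi' [Hj' Hij']] [-> Sv]]]]]].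
  - destruct (Nat.eq_dec m m') as [->|ne]; auto.
    exfalso; apply NZ. apply (two_zero p f m m'); auto.
  - exfalso. apply notI in Sv. simpl in Sv.
    destruct m as [|[|[|m]]]; destruct i' as [|[|[|i']]]; destruct j' as [|[|[|j']]]; try lia;
    (destruct Sv as [Sv|Sv]; [nra| apply NZ; repeat split; lra]).
  - exfalso. apply notI in Su. simpl in Su.
    destruct m' as [|[|[|m]]]; destruct i as [|[|[|i]]]; destruct j as [|[|[|j]]]; try lia;
    (destruct Su as [Su|Su]; [nra| apply NZ; repeat split; lra]).
  - assert (NZi : ~ (fst (Av p f i, - Av p f j) = 0 /\ snd (Av p f i, - Av p f j) = 0)).
    { simpl. intros [a b]. apply NZ. apply (two_zero p f i j); auto; lra. }
    destruct (Nat.eq_dec i i') as [<-|ni]; [destruct (Nat.eq_dec j j') as [<-|nj]|].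
    + rewrite (Q_uniq u _ v NZi Su Sv). reflexivity.
    + assert (j' = i \/ j' <> i) as [->|nj'] by lia; [lia|].
      exfalso. apply notI in Su. apply notI in Sv. simpl in Su, Sv.
      destruct i as [|[|[|i]]]; destruct j as [|[|[|j]]]; destruct j' as [|[|[|j']]]; try lia;
      (destruct Su as [Su|Su]; destruct Sv as [Sv|Sv]; first [nra | (apply NZ; repeat split; lra)]).
    + destruct (Nat.eq_dec i j') as [<-|nij]; [destruct (Nat.eq_dec j i') as [<-|nji]|].
      * assert (Sv' : sumQ (Av p f i, - Av p f j) (map negb v) = 0).
        { rewrite <- (Ropp_involutive (Av p f i)) at 1. rewrite sumQ_flip, Sv. ring. }
        rewrite (Q_uniq u _ (map negb v) NZi Su Sv'). rewrite mid_flip, <- (edge_rev p j i (mid v)). reflexivity.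
      * exfalso. apply notI in Su. apply notI in Sv. simpl in Su, Sv.
        destruct i as [|[|[|i]]]; destruct j as [|[|[|j]]]; destruct i' as [|[|[|i']]]; try lia;
        (destruct Su as [Su|Su]; destruct Sv as [Sv|Sv]; first [nra | (apply NZ; repeat split; lra)]).
      * exfalso. apply notI in Su. apply notI in Sv. simpl in Su, Sv.
        destruct i as [|[|[|i]]]; destruct j as [|[|[|j]]]; destruct i' as [|[|[|i']]];
        destruct j' as [|[|[|j']]]; try lia;
        (destruct Su as [Su|Su]; destruct Sv as [Sv|Sv]; first [nra | (apply NZ; repeat split; lra)]).
Qed.



Lemma near_pt t d : 0 <= t <= 1 -> 0 < d -> exists s, 0 <= s <= 1 /\ 0 < Rabs (s - t) < d.
Proof.
  intros Ht Hd. destruct (Rlt_dec t 1).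
  - exists (t + Rmin d (1 - t) / 2). pose proof (Rmin_l d (1-t)). pose proof (Rmin_r d (1-t)).
    assert (0 < Rmin d (1 - t)) by (apply Rmin_pos; lra).
    rewrite Rabs_pos_eq; lra.
  - exists (t - Rmin d t / 2). pose proof (Rmin_l d t). pose proof (Rmin_r d t).
    assert (0 < Rmin d t) by (apply Rmin_pos; lra).
    rewrite Rabs_left; lra.
Qed.

Lemma zero_inf g t : 0 <= t <= 1 -> zero_deriv g t -> infinite_deriv g t -> False.
Proof.
  intros Ht Z I. destruct (Z 1 ltac:(lra)) as [d1 [Hd1 H1]].
  destruct I as [I|I]; [destruct (I 1) as [d2 [Hd2 H2]] | destruct (I (-1)) as [d2 [Hd2 H2]]];
  destruct (near_pt t (Rmin d1 d2) Ht ltac:(apply Rmin_pos; lra)) as [s [Hs Hst]];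
  pose proof (Rmin_l d1 d2); pose proof (Rmin_r d1 d2);
  specialize (H1 s Hs ltac:(lra)); specialize (H2 s Hs ltac:(lra));
  apply Rabs_def2 in H1; lra.
Qed.

Theorem lemma6 (p : nat -> pt) (f : pt -> R) :
  unit_equilateral p ->
  harmonic p f ->
  (exists x y, K p x /\ K p y /\ f x <> f y) ->
  (forall t1 t2, 0 <= t1 <= 1 -> 0 <= t2 <= 1 ->
     junction p (edge p 1 2 t1) -> junction p (edge p 1 2 t2) ->
     ~ infinite_deriv (fun s => f (edge p 1 2 s)) t1 ->
     ~ infinite_deriv (fun s => f (edge p 1 2 s)) t2 ->
     t1 = t2) /\
  (forall x y, junction p x -> junction p y -> on_contour p x -> on_contour p y ->
     ~ good_point p f x -> ~ good_point p f y -> x = y) /\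
  (forall x y, junction p x -> junction p y -> on_contour p x -> on_contour p y ->
     vanishing_point p f x -> vanishing_point p f y -> x = y).
Proof.
  intros U Hh Hnc.
  assert (NZ : ~ (Av p f 0 = 0 /\ Av p f 1 = 0 /\ Av p f 2 = 0)).
  { intros [a0 [a1 a2]]. destruct Hnc as [x [y [Kx [Ky Hxy]]]]. apply Hxy.
    rewrite (const_K p f U Hh a0 a1 a2 x Kx), (const_K p f U Hh a0 a1 a2 y Ky). reflexivity. }
  assert (P2 : forall x y, junction p x -> junction p y ->
     ~ good_point p f x -> ~ good_point p f y -> x = y).
  { intros x y Jx Jy Gx Gy. apply (desc_uniq p f x y NZ U); apply bad_desc; auto. }
  assert (VG : forall x, vanishing_point p f x -> ~ good_point p f x).
  { intros x [i [j [t [Hi [Hj [Hij [Ht [Hx Z]]]]]]]] G.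
    apply (zero_inf _ t Ht Z). apply G; auto. }
  split; [|split].
  - intros t1 t2 H1 H2 J1 J2 N1 N2.
    assert (E : edge p 1 2 t1 = edge p 1 2 t2).
    { apply P2; auto.
      - intro G. apply N1. apply G; auto; lia.
      - intro G. apply N2. apply G; auto; lia. }
    apply edge_inj in E; auto; lia.
  - intros x y Jx Jy _ _ Gx Gy. apply P2; auto.
  - intros x y Jx Jy _ _ Vx Vy. apply P2; auto.
Qed.
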